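(* Let $p\in\mathbb{N}$, $A>0$, and let $\alpha_1,\dots,\alpha_p,\beta_1,\dots,\beta_p$ be real numbers such that $0<\alpha_1\le\dots\le\alpha_p$, $0<\beta_1\le\dots\le\beta_p$, $\sum_{j=1}^k\beta_j-\sum_{j=1}^k\alpha_j\ge0$ for $k=1,\dots,p$, and $\sum_{j=1}^p(\beta_j-\alpha_j)>0$. Then the function $$z\mapsto{}_p\Psi_p\Big[_{(\beta_1,A),\dots,(\beta_p,A)}^{(\alpha_1,A),\dots,(\alpha_p,A)}\Big|-z\Big]$$ is completely monotonic on $(0,\infty)$.
   Context: The Fox-Wright function is ${}_p\Psi_p\Big[_{(\beta_1,A),\dots,(\beta_p,A)}^{(\alpha_1,A),\dots,(\alpha_p,A)}\Big|z\Big]=\sum_{k=0}^\infty\prod_{i=1}^p\frac{\Gamma(\alpha_i+kA)}{\Gamma(\beta_i+kA)}\frac{z^k}{k!}$. A function $f$ on an interval $I$ is completely monotonic if it is infinitely differentiable and $(-1)^nf^{(n)}\ge0$ on $I$ for all $n\in\mathbb{N}_0$. *)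

(* Defs.v *)
From Stdlib Require Import Reals List Arith Factorial.
From Coquelicot Require Import Coquelicot.
Open Scope R_scope.

Definition rsum (f : nat -> R) (n : nat) : R :=
  fold_right Rplus 0 (map f (seq 0 n)).
Definition rprod (f : nat -> R) (n : nat) : R :=
  fold_right Rmult 1 (map f (seq 0 n)).

Definition Gamma (x : R) : R :=
  RInt_gen (fun t => Rpower t (x - 1) * exp (- t))
           (at_right 0) (Rbar_locally p_infty).

(* Fox-Wright function  pPsi_p[(alpha_i, A); (beta_i, A) | z]
   = sum_k prod_{i<p} Gamma(alpha_i + k A)/Gamma(beta_i + k A) * z^k / k!
   (parameters indexed by 0 <= i < p). *)
Definition FoxWright (p : nat) (A : R) (alpha beta : nat -> R) (z : R) : R :=
  Series (fun k =>
    rprod (fun i => Gamma (alpha i + INR k * A) / Gamma (beta i + INR k * A)) p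
    * z ^ k / INR (Factorial.fact k)).

Definition completely_monotonic_pos (f : R -> R) : Prop :=
  forall (n : nat) (x : R), 0 < x ->
    ex_derive (Derive_n f n) x /\ 0 <= (-1) ^ n * Derive_n f n x.

(* Main.v *)
Require Import Defs.
From Stdlib Require Import Reals List.
From Coquelicot Require Import Coquelicot.
From Stdlib Require Import Lra Lia Psatz Factorial FunctionalExtensionality.
Open Scope R_scope.

Fixpoint sm (F : nat -> R) (n : nat) : R :=
  match n with O => 0 | S k => sm F k + F k end.
Fixpoint pr (F : nat -> R) (n : nat) : R :=
  match n with O => 1 | S k => pr F k * F k end.

Lemma fold_plus_acc (l : list R) a : fold_right Rplus a l = fold_right Rplus 0 l + a.
Proof. induction l; simpl; [lra|rewrite IHl; lra]. Qed.
Lemma fold_mult_acc (l : list R) a : fold_right Rmult a l = fold_right Rmult 1 l * a.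
Proof. induction l; simpl; [lra|rewrite IHl; lra]. Qed.

Lemma rsum_sm F n : rsum F n = sm F n.
Proof.
  unfold rsum. induction n; [reflexivity|].
  rewrite seq_S, map_app, fold_right_app. simpl. rewrite fold_plus_acc, IHn. simpl. lra.
Qed.
Lemma rprod_pr F n : rprod F n = pr F n.
Proof.
  unfold rprod. induction n; [reflexivity|].
  rewrite seq_S, map_app, fold_right_app. simpl. rewrite fold_mult_acc, IHn. simpl. lra.
Qed.

Lemma sm_ext F G n : (forall j, (j < n)%nat -> F j = G j) -> sm F n = sm G n.
Proof. induction n; intros H; simpl; auto. rewrite IHn, H; auto. Qed.
Lemma pr_ext F G n : (forall j, (j < n)%nat -> F j = G j) -> pr F n = pr G n.
Proof. induction n; intros H; simpl; auto. rewrite IHn, H; auto. Qed.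
Lemma sm_plus F G n : sm (fun j => F j + G j) n = sm F n + sm G n.
Proof. induction n; simpl; [lra|rewrite IHn; lra]. Qed.
Lemma sm_minus F G n : sm (fun j => F j - G j) n = sm F n - sm G n.
Proof. induction n; simpl; [lra|rewrite IHn; lra]. Qed.
Lemma sm_scal c F n : sm (fun j => c * F j) n = c * sm F n.
Proof. induction n; simpl; [lra|rewrite IHn; lra]. Qed.
Lemma sm_shift F n : sm F (S n) = F O + sm (fun j => F (S j)) n.
Proof. induction n; simpl in *; [lra|rewrite IHn; lra]. Qed.
Lemma pr_shift F n : pr F (S n) = F O * pr (fun j => F (S j)) n.
Proof. induction n; simpl in *; [lra|rewrite IHn; lra]. Qed.
Lemma pr_mult F G n : pr (fun j => F j * G j) n = pr F n * pr G n.
Proof. induction n; simpl; [lra|rewrite IHn; lra]. Qed.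
Lemma pr_inv F n : (forall j, (j < n)%nat -> F j <> 0) -> pr (fun j => / F j) n = / pr F n.
Proof.
  induction n; intros H; simpl. field.
  rewrite IHn by auto. assert (pr F n <> 0).
  { clear IHn. induction n; simpl. lra. apply Rmult_integral_contrapositive; split; auto. }
  field; split; auto.
Qed.
Lemma sm_nonneg F n : (forall j, (j < n)%nat -> 0 <= F j) -> 0 <= sm F n.
Proof. induction n; intros H; simpl. lra. assert (0 <= F n) by auto. assert (0 <= sm F n) by auto. lra. Qed.
Lemma pr_pos F n : (forall j, (j < n)%nat -> 0 < F j) -> 0 < pr F n.
Proof. induction n; intros H; simpl. lra. apply Rmult_lt_0_compat; auto. Qed.
Lemma pr_swap (F : nat -> nat -> R) n m :
  pr (fun i => pr (fun j => F i j) m) n = pr (fun j => pr (fun i => F i j) n) m.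
Proof.
  induction n; simpl. induction m; simpl; lra.
  rewrite IHn. rewrite <- pr_mult. auto.
Qed.

Fixpoint Cb (m j : nat) : R :=
  match m, j with
  | O, O => 1
  | O, S _ => 0
  | S m', O => 1
  | S m', S j' => Cb m' j' + Cb m' (S j')
  end.

Lemma Cb_0 m : Cb m 0 = 1.
Proof. destruct m; auto. Qed.
Lemma Cb_big m j : (m < j)%nat -> Cb m j = 0.
Proof.
  revert j; induction m; intros j H; destruct j; simpl; try lia; auto.
  rewrite !IHm by lia. lra.
Qed.
Lemma Cb_nonneg m j : 0 <= Cb m j.
Proof. revert j; induction m; destruct j; simpl; try lra. specialize (IHm j) as H1. specialize (IHm (S j)). lra. Qed.

Lemma pascal_sum (X : nat -> R) m :
  sm (fun j => Cb (S m) j * X j) (S (S m)) =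
  sm (fun j => Cb m j * X j) (S m) + sm (fun j => Cb m j * X (S j)) (S m).
Proof.
  rewrite sm_shift. simpl (Cb (S m) 0).
  replace (sm (fun j => Cb (S m) (S j) * X (S j)) (S m)) with
     (sm (fun j => Cb m j * X (S j)) (S m) + sm (fun j => Cb m (S j) * X (S j)) (S m)).
  2:{ rewrite <- sm_plus. apply sm_ext. intros; simpl; lra. }
  assert (E : sm (fun j => Cb m j * X j) (S (S m)) = sm (fun j => Cb m j * X j) (S m)).
  { change (sm (fun j => Cb m j * X j) (S m) + Cb m (S m) * X (S m) = sm (fun j => Cb m j * X j) (S m)).
    rewrite Cb_big by lia. lra. }
  rewrite <- E, (sm_shift (fun j => Cb m j * X j) (S m)), Cb_0. lra.
Qed.

Lemma is_derive_cst (c x : R) : is_derive (fun _ => c) x 0.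
Proof. exact (is_derive_const c x). Qed.
Lemma is_derive_pl (f g : R -> R) x a b : is_derive f x a -> is_derive g x b ->
  is_derive (fun y => f y + g y) x (a + b).
Proof. intros; apply @is_derive_plus; auto. Qed.

Definition tower (L : R) (D : nat -> R -> R) :=
  forall k x, L < x -> is_derive (D k) x (D (S k) x).

Lemma loc_gt L x : L < x -> locally x (fun t => L < t).
Proof. intros H. apply (open_gt L). auto. Qed.

Lemma tower_Derive_n L D : tower L D ->
  forall k x, L < x -> Derive_n (D O) k x = D k x.
Proof.
  intros HT k. induction k; intros x Hx; simpl; auto.
  rewrite (Derive_ext_loc _ (D k)).
  - apply is_derive_unique. apply HT; auto.
  - eapply filter_imp; [|apply (loc_gt L x Hx)]. intros t Ht. apply IHk; auto.
Qed.

Lemma tower_ex L D : tower L D ->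
  forall k x, L < x -> ex_derive (Derive_n (D O) k) x.
Proof.
  intros HT k x Hx. apply ex_derive_ext_loc with (D k).
  - eapply filter_imp; [|apply (loc_gt L x Hx)]. intros t Ht. symmetry. apply (tower_Derive_n L D HT); auto.
  - eexists. apply HT; auto.
Qed.

Lemma tower_uniq L D E : tower L D -> tower L E ->
  (forall x, L < x -> D O x = E O x) -> forall k x, L < x -> D k x = E k x.
Proof.
  intros HD HE H0 k. induction k; intros x Hx; auto.
  assert (H1 := HD k x Hx). assert (H2 := HE k x Hx).
  apply is_derive_ext_loc with (g := E k) in H1.
  - apply is_derive_unique in H1. apply is_derive_unique in H2. congruence.
  - eapply filter_imp; [|apply (loc_gt L x Hx)]. intros t Ht. apply IHk; auto.
Qed.

Lemma tower_plus L D E : tower L D -> tower L E -> tower L (fun k x => D k x + E k x).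
Proof. intros HD HE k x Hx. apply @is_derive_plus; auto. Qed.

Lemma tower_scal L c D : tower L D -> tower L (fun k x => c * D k x).
Proof. intros HD k x Hx. apply is_derive_scal; auto. Qed.

Lemma tower_shift L h D : 0 <= h -> tower L D -> tower L (fun k x => D k (x + h)).
Proof.
  intros Hh HD k x Hx.
  replace (D (S k) (x + h)) with (1 * D (S k) (x + h)) by ring.
  apply (is_derive_comp (D k) (fun x => x + h)).
  - apply HD; lra.
  - auto_derive; auto; ring.
Qed.

Definition t_const_add (c : R) (D : nat -> R -> R) : nat -> R -> R :=
  fun k x => match k with O => c + D O x | _ => D k x end.
Lemma tower_const_add L c D : tower L D -> tower L (t_const_add c D).
Proof.
  intros HD k x Hx. destruct k; simpl.
  - replace (D 1%nat x) with (0 + D 1%nat x) by ring. apply is_derive_pl. apply is_derive_cst. apply HD; auto.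
  - apply HD; auto.
Qed.

Lemma is_derive_sm (H : nat -> R -> R) (H' : nat -> R) n x :
  (forall m, (m < n)%nat -> is_derive (H m) x (H' m)) ->
  is_derive (fun y => sm (fun m => H m y) n) x (sm H' n).
Proof.
  induction n; intros Hd; simpl.
  - apply is_derive_cst.
  - apply is_derive_pl. apply IHn; auto. apply Hd; auto.
Qed.

Lemma tower_sm L (Fm : nat -> nat -> R -> R) n :
  (forall m, (m < n)%nat -> tower L (Fm m)) ->
  tower L (fun k x => sm (fun m => Fm m k x) n).
Proof. intros H k x Hx. apply is_derive_sm. intros m Hm. apply H; auto. Qed.

Definition leib (F G : nat -> R -> R) : nat -> R -> R :=
  fun k x => sm (fun j => Cb k j * (F j x * G (k - j)%nat x)) (S k).

Lemma leib_0 F G x : leib F G O x = F O x * G O x.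
Proof. unfold leib. simpl. ring. Qed.
Lemma leib_1 F G x : leib F G 1%nat x = F O x * G 1%nat x + F 1%nat x * G O x.
Proof. unfold leib. simpl. ring. Qed.

Lemma is_derive_mul (f g : R -> R) x a b : is_derive f x a -> is_derive g x b ->
  is_derive (fun y => f y * g y) x (a * g x + f x * b).
Proof. intros Ha Hb. apply (is_derive_mult f g x a b Ha Hb). intros; apply Rmult_comm. Qed.
Lemma is_derive_sc (f : R -> R) c x a : is_derive f x a ->
  is_derive (fun y => c * f y) x (c * a).
Proof. intros Ha. apply (is_derive_scal f x c a Ha). Qed.

Lemma tower_mult L F G : tower L F -> tower L G -> tower L (leib F G).
Proof.
  intros HF HG k x Hx. unfold leib at 1.
  assert (HD : is_derive (fun y => sm (fun j => Cb k j * (F j y * G (k - j)%nat y)) (S k)) x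
     (sm (fun j => Cb k j * (F (S j) x * G (k - j)%nat x + F j x * G (S (k - j)) x)) (S k))).
  { apply (is_derive_sm (fun j y => Cb k j * (F j y * G (k - j)%nat y))).
    intros m Hm. apply is_derive_sc. apply is_derive_mul; apply HF || apply HG; auto. }
  replace (leib F G (S k) x) with
    (sm (fun j => Cb k j * (F (S j) x * G (k - j)%nat x + F j x * G (S (k - j)) x)) (S k)); auto.
  unfold leib. rewrite (pascal_sum (fun j => F j x * G (S k - j)%nat x) k).
  rewrite Rplus_comm, <- sm_plus. apply sm_ext. intros j Hj.
  replace (S k - j)%nat with (S (k - j)) by lia. simpl. ring.
Qed.

Definition SP (L : R) (D : nat -> R -> R) := forall k x, L < x -> 0 <= (-1) ^ k * D k x.

Lemma SP_leib L Q P : (forall x, L < x -> 0 < Q O x) -> SP L P ->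
  (forall k x, L < x -> Q (S k) x = - leib P Q k x) -> SP L Q.
Proof.
  intros H0 HP HQ.
  assert (forall n k x, (k <= n)%nat -> L < x -> 0 <= (-1) ^ k * Q k x).
  { induction n; intros k x Hk Hx.
    - replace k with O by lia. simpl. specialize (H0 x Hx). lra.
    - destruct k as [|k]. simpl. specialize (H0 x Hx). lra.
      rewrite HQ by auto. unfold leib.
      replace ((-1) ^ S k * - sm (fun j => Cb k j * (P j x * Q (k - j)%nat x)) (S k)) with
        ((-1) ^ k * sm (fun j => Cb k j * (P j x * Q (k - j)%nat x)) (S k)) by (simpl; ring).
      rewrite <- sm_scal. apply sm_nonneg. intros j Hj.
      replace ((-1) ^ k) with ((-1) ^ j * (-1) ^ (k - j)) by (rewrite <- pow_add; f_equal; lia).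
      replace ((-1) ^ j * (-1) ^ (k - j) * (Cb k j * (P j x * Q (k - j)%nat x))) with
        (Cb k j * (((-1) ^ j * P j x) * ((-1) ^ (k - j) * Q (k - j)%nat x))) by ring.
      apply Rmult_le_pos. apply Cb_nonneg. apply Rmult_le_pos. apply HP; auto.
      apply IHn; auto; lia. }
  intros k x Hx. apply (H k k x); auto.
Qed.

Definition one_t : nat -> R -> R := fun k x => match k with O => 1 | _ => 0 end.
Lemma tower_one L : tower L one_t.
Proof. intros k x Hx. destruct k; simpl; apply is_derive_cst. Qed.

Fixpoint TP (Fm : nat -> nat -> R -> R) (n : nat) : nat -> R -> R :=
  match n with O => one_t | S n' => leib (TP Fm n') (Fm n') end.

Lemma tower_TP L Fm n : (forall m, (m < n)%nat -> tower L (Fm m)) -> tower L (TP Fm n).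
Proof.
  induction n; intros H; simpl. apply tower_one. apply tower_mult; auto.
Qed.
Lemma TP_0 Fm n x : TP Fm n O x = pr (fun m => Fm m O x) n.
Proof. induction n; simpl; auto. rewrite leib_0, IHn. auto. Qed.
Lemma TP_1 Fm g n x : (forall m, (m < n)%nat -> Fm m 1%nat x = - g m * Fm m O x) ->
  TP Fm n 1%nat x = - sm g n * TP Fm n O x.
Proof.
  induction n; intros H; simpl. ring. rewrite leib_1, leib_0, IHn, H by auto. ring.
Qed.

Fixpoint Dd (m : nat) (u : nat -> R) (k : nat) : R :=
  match m with O => u k | S m' => Dd m' u k - Dd m' u (S k) end.

Lemma Dd_ext m u v k : (forall i, u i = v i) -> Dd m u k = Dd m v k.
Proof. revert k; induction m; intros k H; simpl; auto. rewrite !(IHm _ H). auto. Qed.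
Lemma Dd_S_alt m u k : Dd (S m) u k = Dd m (fun i => u i - u (S i)) k.
Proof.
  revert k; induction m; intros k. simpl. auto.
  change (Dd (S m) u k - Dd (S m) u (S k) = Dd m (fun i => u i - u (S i)) k - Dd m (fun i => u i - u (S i)) (S k)).
  rewrite !IHm. auto.
Qed.
Lemma Dd_scal m c u k : Dd m (fun i => c * u i) k = c * Dd m u k.
Proof. revert k; induction m; intros k; simpl; auto. rewrite !IHm. ring. Qed.
Lemma Dd_lim m (U : nat -> nat -> R) (u : nat -> R) k : (forall i, is_lim_seq (fun N => U N i) (u i)) ->
  is_lim_seq (fun N => Dd m (U N) k) (Dd m u k).
Proof.
  revert k; induction m; intros k H; simpl; auto.
  apply is_lim_seq_minus'; auto.
Qed.

Lemma SP_diff L D h : 0 < h -> tower L D -> SP L D -> SP L (fun k x => D k x - D k (x + h)).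
Proof.
  intros Hh HD HS k x Hx.
  destruct (MVT_gen (fun t => (-1) ^ k * D k t) x (x + h) (fun t => (-1) ^ k * D (S k) t)) as [c [Hc Hm]].
  - intros t Ht. apply is_derive_sc. apply HD. rewrite Rmin_left in Ht by lra. lra.
  - intros t Ht. rewrite Rmin_left in Ht by lra. apply continuity_pt_filterlim.
    apply (ex_derive_continuous (fun t => (-1) ^ k * D k t)). eexists. apply is_derive_sc. apply HD. lra.
  - rewrite Rmin_left, Rmax_right in Hc by lra.
    assert (0 <= (-1) ^ (S k) * D (S k) c) by (apply HS; lra).
    simpl in H. nra.
Qed.

Lemma CM_discrete m : forall L D h, L < 0 -> 0 < h -> tower L D -> SP L D ->
  forall k, 0 <= Dd m (fun i => D O (INR i * h)) k.
Proof.
  induction m; intros L D h HL Hh HD HS k.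
  - simpl. specialize (HS O (INR k * h)). simpl in HS.
    assert (0 <= INR k * h) by (apply Rmult_le_pos; [apply pos_INR|lra]). 
    assert (H1 := HS ltac:(lra)). lra.
  - rewrite Dd_S_alt.
    rewrite (Dd_ext m _ (fun i => (fun k x => D k x + -1 * D k (x + h)) O (INR i * h))).
    + apply (IHm L (fun k x => D k x + -1 * D k (x + h)) h); auto.
      * apply tower_plus; auto. apply tower_scal. apply tower_shift; auto; lra.
      * intros j x Hx. assert (H := SP_diff L D h Hh HD HS j x Hx). 
        replace (D j x + -1 * D j (x + h)) with (D j x - D j (x + h)) by ring. auto.
    + intros i. rewrite S_INR. simpl. replace ((INR i + 1) * h) with (INR i * h + h) by ring. ring.
Qed.

Lemma bernoulli n w : 0 <= w -> 1 + INR n * (w - 1) <= w ^ n.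
Proof.
  intros Hw. induction n. simpl. lra.
  rewrite S_INR. simpl.
  assert (H1 : w * (1 + INR n * (w - 1)) <= w * w ^ n) by (apply Rmult_le_compat_l; auto).
  assert (0 <= INR n) by apply pos_INR.
  assert (0 <= INR n * ((w - 1) * (w - 1))) by (apply Rmult_le_pos; [lra | apply Rle_0_sqr]).
  nra.
Qed.

Lemma tangent n u v : 0 < u -> 0 < v ->
  INR (S n) * / v ^ (S (S n)) * (v - u) <= / u ^ (S n) - / v ^ (S n).
Proof.
  intros Hu Hv. set (w := v / u).
  assert (Hw : 0 < w) by (unfold w; apply Rdiv_lt_0_compat; auto).
  assert (Hvw : v = w * u) by (unfold w; field; lra).
  rewrite Hvw. rewrite !Rpow_mult_distr.
  assert (HU : 0 < u ^ S n) by (apply pow_lt; auto).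
  assert (HW : 0 < w ^ S n) by (apply pow_lt; auto).
  replace (w ^ S (S n)) with (w * w ^ S n) by (simpl; ring).
  replace (u ^ S (S n)) with (u * u ^ S n) by (simpl; ring).
  assert (HB := bernoulli (S (S n)) w (Rlt_le _ _ Hw)).
  replace (w ^ S (S n)) with (w * w ^ S n) in HB by (simpl; ring).
  rewrite !S_INR in HB |- *.
  assert (E : / u ^ S n - / (w ^ S n * u ^ S n) - (INR n + 1) * / (w * w ^ S n * (u * u ^ S n)) * (w * u - u)
     = (w * w ^ S n - w - (INR n + 1) * (w - 1)) / (w * w ^ S n * u ^ S n)) by (field; lra).
  assert (0 <= (w * w ^ S n - w - (INR n + 1) * (w - 1)) / (w * w ^ S n * u ^ S n)).
  { apply Rdiv_le_0_compat. rewrite S_INR in HB. lra. apply Rmult_lt_0_compat; [apply Rmult_lt_0_compat|]; auto. }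
  lra.
Qed.

Lemma abel p (D d : nat -> R) :
  (forall i, (i + 1 < p)%nat -> D (i + 1)%nat <= D i) -> (forall i, (i < p)%nat -> 0 <= D i) ->
  (forall k, (1 <= k <= p)%nat -> 0 <= sm d k) -> 0 <= sm (fun i => D i * d i) p.
Proof.
  intros HD HD0 Hd.
  assert (forall n, (S n <= p)%nat -> D n * sm d (S n) <= sm (fun i => D i * d i) (S n)).
  { induction n; intros Hn. simpl. lra.
    assert (IH := IHn ltac:(lia)).
    assert (H1 : D (S n) <= D n) by (replace (S n) with (n + 1)%nat by lia; apply HD; lia).
    assert (H2 : 0 <= sm d (S n)) by (apply Hd; lia).
    change (sm (fun i => D i * d i) (S (S n))) with (sm (fun i => D i * d i) (S n) + D (S n) * d (S n)).
    change (sm d (S (S n))) with (sm d (S n) + d (S n)). nra. }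
  destruct p. simpl; lra.
  assert (H1 := H p ltac:(lia)). assert (0 <= D p) by (apply HD0; lia).
  assert (0 <= sm d (S p)) by (apply Hd; lia). nra.
Qed.

Lemma major p (a b : nat -> R) q y :
  (forall i, (i < p)%nat -> 0 < a i + y) -> (forall i, (i < p)%nat -> 0 < b i + y) ->
  (forall i, (i + 1 < p)%nat -> b i <= b (i + 1)%nat) ->
  (forall k, (1 <= k <= p)%nat -> sm b k - sm a k >= 0) ->
  0 <= sm (fun i => / (a i + y) ^ (S q) - / (b i + y) ^ (S q)) p.
Proof.
  intros Ha Hb Hbs Hs.
  apply Rle_trans with (sm (fun i => (INR (S q) * / (b i + y) ^ (S (S q))) * (b i - a i)) p).
  - apply abel.
    + intros i Hi. apply Rmult_le_compat_l. apply pos_INR.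
      apply Rinv_le_contravar. apply pow_lt. apply Hb; lia.
      apply pow_incr. split. apply Rlt_le, Hb; lia. assert (H := Hbs i Hi). lra.
    + intros i Hi. apply Rmult_le_pos. apply pos_INR. apply Rlt_le, Rinv_0_lt_compat, pow_lt, Hb; auto.
    + intros k Hk. rewrite sm_minus. specialize (Hs k Hk). lra.
  - assert (0 <= sm (fun i => (/ (a i + y) ^ S q - / (b i + y) ^ S q) - INR (S q) * / (b i + y) ^ S (S q) * (b i - a i)) p).
    { apply sm_nonneg. intros j Hj. assert (H := tangent q (a j + y) (b j + y) (Ha j Hj) (Hb j Hj)).
      replace (b j + y - (a j + y)) with (b j - a j) in H by ring. lra. }
    rewrite sm_minus in H. lra.
Qed.

Definition it_inv (c : R) (k : nat) (x : R) : R := (-1) ^ k * INR (fact k) / (c + x) ^ (S k).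

Lemma tower_inv c : tower (- c) (it_inv c).
Proof.
  intros k x Hx. unfold it_inv.
  assert (0 < c + x) by lra.
  assert (Hp : (c + x) ^ k <> 0) by (apply pow_nonzero; lra).
  auto_derive.
  - apply Rmult_integral_contrapositive; split; lra.
  - rewrite fact_simpl, mult_INR, S_INR. simpl. assert (E: match k with 0%nat => 1 | S _ => INR k + 1 end = INR k + 1) by (destruct k; simpl; ring). rewrite E. field. split; lra.
Qed.

Lemma tower_mono L L' D : L <= L' -> tower L D -> tower L' D.
Proof. intros H HD k x Hx. apply HD; lra. Qed.

Definition ft (c d : R) (k : nat) (x : R) : R :=
  match k with O => (d + x) / (c + x) | S k' => (d - c) * it_inv c (S k') x end.

Lemma tower_ft c d : tower (- c) (ft c d).
Proof.
  intros k x Hx. destruct k.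
  - change (is_derive (fun x => (d + x) / (c + x)) x ((d - c) * it_inv c 1 x)). unfold it_inv. assert (c + x <> 0) by lra. auto_derive. auto. simpl. field. auto.
  - apply is_derive_sc. apply tower_inv; auto.
Qed.

Lemma ft_1 c d x : 0 < c + x -> 0 < d + x ->
  ft c d 1%nat x = - (/ (c + x) - / (d + x)) * ft c d O x.
Proof. intros. unfold ft, it_inv. simpl. field. lra. Qed.

Section QP.
Variables (p N : nat) (a b : nat -> R) (dl : R).
Hypothesis Hdl : 0 < dl.
Hypothesis Ha : forall i, (i < p)%nat -> dl < a i.
Hypothesis Hb : forall i, (i < p)%nat -> dl < b i.
Hypothesis Hbs : forall i, (i + 1 < p)%nat -> b i <= b (i + 1)%nat.
Hypothesis Hs : forall k, (1 <= k <= p)%nat -> sm b k - sm a k >= 0.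

Definition Fm (j : nat) (i : nat) := ft (a i + INR j) (b i + INR j).
Definition Qt := TP (fun j => TP (Fm j) p) (S N).
Definition psi : nat -> R -> R := fun k x =>
  sm (fun j => sm (fun i => it_inv (a i + INR j) k x + -1 * it_inv (b i + INR j) k x) p) (S N).

Lemma tower_Qt : tower (- dl) Qt.
Proof.
  apply tower_TP. intros j Hj. apply tower_TP. intros i Hi.
  apply tower_mono with (- (a i + INR j)). assert (H := Ha i Hi). assert (0 <= INR j) by apply pos_INR. lra.
  apply tower_ft.
Qed.

Lemma tower_psi : tower (- dl) psi.
Proof.
  apply (tower_sm _ (fun j k x => sm (fun i => it_inv (a i + INR j) k x + -1 * it_inv (b i + INR j) k x) p)).
  intros j Hj.
  apply (tower_sm _ (fun i k x => it_inv (a i + INR j) k x + -1 * it_inv (b i + INR j) k x)).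
  intros i Hi. assert (H1 := Ha i Hi). assert (H2 := Hb i Hi). assert (0 <= INR j) by apply pos_INR.
  apply tower_plus. apply tower_mono with (- (a i + INR j)). lra. apply tower_inv.
  apply tower_scal. apply tower_mono with (- (b i + INR j)). lra. apply tower_inv.
Qed.

Lemma SP_psi : SP (- dl) psi.
Proof.
  intros k x Hx. unfold psi. rewrite <- sm_scal. apply sm_nonneg. intros j Hj.
  rewrite <- sm_scal.
  replace (sm (fun j0 => (-1) ^ k * (it_inv (a j0 + INR j) k x + -1 * it_inv (b j0 + INR j) k x)) p)
    with (INR (fact k) * sm (fun i => / (a i + (x + INR j)) ^ (S k) - / (b i + (x + INR j)) ^ (S k)) p).
  - apply Rmult_le_pos. apply pos_INR. assert (0 <= INR j) by apply pos_INR.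
    apply major; auto.
    + intros i Hi. assert (H0 := Ha i Hi). lra.
    + intros i Hi. assert (H0 := Hb i Hi). lra.
  - rewrite <- sm_scal. apply sm_ext. intros i Hi. unfold it_inv.
    replace (a i + INR j + x) with (a i + (x + INR j)) by ring.
    replace (b i + INR j + x) with (b i + (x + INR j)) by ring.
    assert (E : (-1) ^ k * (-1) ^ k = 1) by (rewrite <- pow_add; replace (k + k)%nat with (2 * k)%nat by lia; apply pow_1_even).
    set (s := (-1) ^ k) in *. set (A1 := (a i + (x + INR j)) ^ S k). set (B1 := (b i + (x + INR j)) ^ S k).
    unfold Rdiv. transitivity ((s * s) * (INR (fact k) * (/ A1 - / B1))). rewrite E; ring. ring.
Qed.

Lemma Qt_pos x : - dl < x -> 0 < Qt O x.
Proof.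
  intros Hx. unfold Qt. rewrite TP_0. apply pr_pos. intros j Hj. rewrite TP_0. apply pr_pos.
  intros i Hi. unfold Fm, ft. assert (H1 := Ha i Hi). assert (H2 := Hb i Hi).
  assert (0 <= INR j) by apply pos_INR. apply Rdiv_lt_0_compat; lra.
Qed.

Lemma Qt_rel k x : - dl < x -> Qt (S k) x = - leib psi Qt k x.
Proof.
  intros Hx.
  assert (H := tower_uniq (- dl) (fun k x => Qt (S k) x) (fun k x => -1 * leib psi Qt k x)).
  rewrite H; auto. ring.
  - intros k' x' Hx'. apply tower_Qt; auto.
  - apply tower_scal. apply tower_mult. apply tower_psi. apply tower_Qt.
  - intros y Hy. rewrite leib_0. unfold Qt.
    rewrite (TP_1 _ (fun j => sm (fun i => / (a i + INR j + y) - / (b i + INR j + y)) p)).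
    + unfold psi. replace (sm (fun j => sm (fun i => it_inv (a i + INR j) 0 y + -1 * it_inv (b i + INR j) 0 y) p) (S N))
        with (sm (fun j => sm (fun i => / (a i + INR j + y) - / (b i + INR j + y)) p) (S N)). ring.
      apply sm_ext. intros j Hj. apply sm_ext. intros i Hi. unfold it_inv. simpl. field.
      assert (H1 := Ha i Hi). assert (H2 := Hb i Hi). assert (0 <= INR j) by apply pos_INR.
      split; lra.
    + intros j' Hj'. apply TP_1. intros i Hi. unfold Fm. apply ft_1.
      assert (H1 := Ha i Hi). assert (0 <= INR j') by apply pos_INR. lra.
      assert (H1 := Hb i Hi). assert (0 <= INR j') by apply pos_INR. lra.
Qed.

Lemma SP_Qt : SP (- dl) Qt.
Proof.
  apply SP_leib with psi. apply Qt_pos. apply SP_psi. intros; apply Qt_rel; auto.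
Qed.

Lemma CM_Qt h : 0 < h -> forall m k, 0 <= Dd m (fun i => Qt O (INR i * h)) k.
Proof.
  intros Hh m k. apply (CM_discrete m (- dl)); auto. lra. apply tower_Qt. apply SP_Qt.
Qed.

Lemma Qt_0 x : Qt O x = pr (fun j => pr (fun i => (b i + INR j + x) / (a i + INR j + x)) p) (S N).
Proof. unfold Qt. rewrite TP_0. apply pr_ext. intros j Hj. rewrite TP_0. auto. Qed.

End QP.

Section IMP.
Variable f : R -> R.
Hypothesis Hc : forall t, 0 < t -> continuous f t.
Hypothesis Hp : forall t, 0 < t -> 0 <= f t.

Lemma exR e M : 0 < e -> 0 < M -> ex_RInt f e M.
Proof.
  intros He HM. apply (ex_RInt_continuous (V:=R_CompleteNormedModule)). intros z Hz. apply Hc.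
  assert (0 < Rmin e M) by (apply Rmin_glb_lt; auto).
  lra.
Qed.

Lemma RInt_mono e e' M M' : 0 < e' -> e' <= e -> e <= M -> M <= M' -> RInt f e M <= RInt f e' M'.
Proof.
  intros H1 H2 H3 H4.
  rewrite <- (RInt_Chasles f e' e M'), <- (RInt_Chasles f e M M').
  - assert (0 <= RInt f e' e) by (apply RInt_ge_0; [lra|apply exR; lra| intros; apply Hp; lra]).
    assert (0 <= RInt f M M') by (apply RInt_ge_0; [lra|apply exR; lra| intros; apply Hp; lra]).
    unfold plus; simpl. lra.
  - apply exR; lra.
  - apply exR; lra.
  - apply exR; lra.
  - apply exR; lra.
Qed.

Lemma imp_int B : (forall e M, 0 < e -> e <= M -> RInt f e M <= B) ->
  exists L : R, is_RInt_gen f (at_right 0) (Rbar_locally p_infty) L /\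
    (forall e M, 0 < e -> e <= M -> RInt f e M <= L) /\
    (forall d, 0 < d -> exists e0 M0, 0 < e0 /\ e0 <= M0 /\
       forall e M, 0 < e -> e <= e0 -> M0 <= M -> L - d < RInt f e M).
Proof.
  intros HB.
  set (u := fun n : nat => RInt f (/ (INR n + 1)) (INR n + 1)).
  assert (Hpos : forall n, 0 < INR n + 1) by (intros; assert (H := pos_INR n); lra).
  assert (Hle : forall n, / (INR n + 1) <= INR n + 1).
  { intros n. assert (H := pos_INR n). apply Rle_trans with 1.
    rewrite <- Rinv_1. apply Rinv_le_contravar; lra. lra. }
  assert (Hinc : forall n, u n <= u (S n)).
  { intros n. unfold u. rewrite S_INR. apply RInt_mono.
    - apply Rinv_0_lt_compat. specialize (Hpos n). lra.
    - apply Rinv_le_contravar. apply Hpos. lra.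
    - apply Hle.
    - lra. }
  assert (Hbd : forall n, u n <= B) by (intros n; apply HB; [apply Rinv_0_lt_compat, Hpos|apply Hle]).
  destruct (ex_finite_lim_seq_incr u B Hinc Hbd) as [L HL].
  assert (HuL : forall n, u n <= L) by (apply is_lim_seq_incr_compare; auto).
  assert (Happ : forall d, 0 < d -> exists e0 M0, 0 < e0 /\ e0 <= M0 /\ forall e M, 0 < e -> e <= e0 -> M0 <= M -> L - d < RInt f e M).
  { intros d Hd. apply is_lim_seq_spec in HL. destruct (HL (mkposreal d Hd)) as [N HN].
    exists (/ (INR N + 1)), (INR N + 1). split. apply Rinv_0_lt_compat, Hpos. split. apply Hle.
    intros e M He He0 HM. specialize (HN N (le_n _)). simpl in HN.
    apply Rlt_le_trans with (u N). apply Rabs_lt_between' in HN. lra.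
    unfold u. apply RInt_mono; auto. }
  exists L. split; [|split; auto].
  - intros P [eps HP]. destruct (Happ eps (cond_pos eps)) as [e0 [M0 [He0 [HeM Hq]]]].
    apply Filter_prod with (Q := fun e => 0 < e /\ e < e0) (R := fun M => M0 < M).
    + exists (mkposreal e0 He0). intros y Hy Hy0. split; auto. 
      change (Rabs (y - 0) < e0) in Hy. rewrite Rminus_0_r in Hy. apply Rabs_lt_between in Hy. lra.
    + exists M0. auto.
    + intros e M [He1 He2] HM. simpl. exists (RInt f e M). split.
      * apply (RInt_correct (V:=R_CompleteNormedModule)). apply exR; lra.
      * apply HP. change (Rabs (RInt f e M - L) < eps). apply Rabs_lt_between'. split.
        apply Hq; lra.
        assert (RInt f e M <= L).
        { destruct (INR_unbounded (Rmax M (/ e))) as [n Hn].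
          apply Rle_trans with (u n); auto. unfold u. apply RInt_mono; try lra.
          apply Rinv_0_lt_compat, Hpos.
          rewrite <- (Rinv_inv e). apply Rinv_le_contravar. apply Rinv_0_lt_compat; lra.
          assert (H := Rmax_r M (/ e)). lra.
          assert (H := Rmax_l M (/ e)). lra. }
        assert (H9 := cond_pos eps). lra.
  - intros e M He HeM. destruct (INR_unbounded (Rmax M (/ e))) as [n Hn].
    apply Rle_trans with (u n); auto. unfold u. apply RInt_mono; try lra.
    apply Rinv_0_lt_compat, Hpos.
    rewrite <- (Rinv_inv e). apply Rinv_le_contravar. apply Rinv_0_lt_compat; lra.
    assert (H := Rmax_r M (/ e)). lra.
    assert (H := Rmax_l M (/ e)). lra.
Qed.

End IMP.

Lemma exd_cont (f : R -> R) x : ex_derive f x -> continuous f x.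
Proof. intros H. apply (ex_derive_continuous (K:=R_AbsRing) (V:=R_NormedModule)); auto. Qed.

Lemma is_derive_mc (f : R -> R) c x a : is_derive f x a -> is_derive (fun y => f y * c) x (a * c).
Proof. intros H. replace (a * c) with (a * c + f x * 0) by ring. apply is_derive_mul; auto. apply is_derive_cst. Qed.

Lemma exp_le x y : x <= y -> exp x <= exp y.
Proof. intros H. destruct (Rle_lt_or_eq_dec _ _ H). apply Rlt_le, exp_increasing; auto. subst; lra. Qed.

Lemma Rpower_pos t y : 0 < Rpower t y.
Proof. unfold Rpower. apply exp_pos. Qed.

Lemma is_derive_Rpower t y : 0 < t -> is_derive (fun s => Rpower s y) t (y * Rpower t (y - 1)).
Proof. intros Ht. apply is_derive_Reals. apply derivable_pt_lim_power; auto. Qed.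

Lemma cont_Rpower t y : 0 < t -> continuous (fun s => Rpower s y) t.
Proof. intros Ht. apply exd_cont. eexists. apply is_derive_Rpower; auto. Qed.

Lemma RInt_FTC (F f : R -> R) a b : a <= b ->
  (forall t, a <= t <= b -> is_derive F t (f t)) -> (forall t, a <= t <= b -> continuous f t) ->
  RInt f a b = F b - F a.
Proof.
  intros Hab HF Hf. apply is_RInt_unique.
  apply (is_RInt_derive (V:=R_CompleteNormedModule) F f); intros t Ht;
  rewrite Rmin_left, Rmax_right in Ht by lra; auto.
Qed.

Definition fg (x t : R) : R := Rpower t (x - 1) * exp (- t).

Lemma fg_derive x t : 0 < t -> ex_derive (fg x) t.
Proof. intros Ht. unfold fg, Rpower. auto_derive. auto. Qed.
Lemma fg_cont x t : 0 < t -> continuous (fg x) t.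
Proof. intros Ht. apply exd_cont, fg_derive; auto. Qed.
Lemma fg_pos x t : 0 <= fg x t.
Proof. unfold fg. apply Rlt_le, Rmult_lt_0_compat. apply Rpower_pos. apply exp_pos. Qed.

Definition Kx (x : R) := exp (Rabs (x - 1) * ln (2 * Rabs (x - 1) + 2)).

Lemma ln_le_sub1 y : 0 < y -> ln y <= y - 1.
Proof. intros Hy. assert (H := exp_ineq1_le (ln y)). rewrite exp_ln in H; lra. Qed.

Lemma Rpow_bound x t : 1 <= t -> Rpower t (x - 1) <= Kx x * exp (t / 2).
Proof.
  intros Ht. unfold Rpower, Kx. rewrite <- exp_plus. apply exp_le.
  set (c := x - 1). set (m := 2 * Rabs c + 2).
  assert (Hm : 2 <= m) by (unfold m; assert (H := Rabs_pos c); lra).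
  assert (Hlm : 0 <= ln m) by (rewrite <- ln_1; apply ln_le; lra).
  assert (Hlt : 0 <= ln t) by (rewrite <- ln_1; apply ln_le; lra).
  destruct (Rle_or_lt c 0) as [Hc|Hc].
  - assert (c * ln t <= 0) by nra. assert (0 <= Rabs c * ln m) by (apply Rmult_le_pos; auto; apply Rabs_pos). lra.
  - rewrite Rabs_right in * by lra. 
    assert (H1 : ln t <= ln m + t / m - 1).
    { replace (ln t) with (ln m + ln (t / m)). assert (H := ln_le_sub1 (t / m)). 
      assert (0 < t / m) by (apply Rdiv_lt_0_compat; lra). specialize (H H0). lra.
      rewrite ln_div by lra. ring. }
    assert (H2 : c * (t / m) <= t / 2).
    { unfold Rdiv. assert (c * (t * / m) = t * (c / m)) by (field; lra). rewrite H.
      apply Rmult_le_compat_l. lra. apply Rmult_le_reg_r with m. lra. unfold Rdiv. rewrite Rmult_assoc, Rinv_l by lra.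
      unfold m. rewrite Rabs_right by lra. lra. }
    nra.
Qed.

Definition Bx (x : R) := / x + 2 * Kx x.

Lemma fg_bound x e M : 0 < x -> 0 < e -> e <= M -> RInt (fg x) e M <= Bx x.
Proof.
  intros Hx He HM.
  set (e' := Rmin e 1). set (M' := Rmax M 1).
  assert (He' : 0 < e') by (apply Rmin_glb_lt; lra).
  assert (H1 : e' <= 1) by apply Rmin_r. assert (H2 : 1 <= M') by apply Rmax_r.
  apply Rle_trans with (RInt (fg x) e' M').
  { apply RInt_mono. intros; apply fg_cont; auto. intros; apply fg_pos. auto. apply Rmin_l. auto. apply Rmax_l. }
  rewrite <- (RInt_Chasles (fg x) e' 1 M').
  2,3: apply exR; [intros; apply fg_cont; auto|lra|lra].
  change (plus (RInt (fg x) e' 1) (RInt (fg x) 1 M')) with (RInt (fg x) e' 1 + RInt (fg x) 1 M').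
  assert (Kpos : 0 < Kx x) by apply exp_pos.
  assert (A1 : RInt (fg x) e' 1 <= / x).
  { apply Rle_trans with (RInt (fun t => Rpower t (x - 1)) e' 1).
    - apply RInt_le; auto. apply exR; [intros; apply fg_cont; auto|lra|lra].
      apply (ex_RInt_continuous (V:=R_CompleteNormedModule)). intros z Hz. apply cont_Rpower.
      rewrite Rmin_left in Hz; lra.
      intros t Ht. unfold fg. assert (H := Rpower_pos t (x - 1)).
      assert (exp (- t) <= 1) by (rewrite <- exp_0; apply exp_le; lra). nra.
    - rewrite (RInt_FTC (fun t => Rpower t x / x)); auto.
      + unfold Rpower at 1. rewrite ln_1, Rmult_0_r, exp_0. assert (H := Rpower_pos e' x).
        assert (0 < / x) by (apply Rinv_0_lt_compat; auto). unfold Rdiv. nra.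
      + intros t Ht. replace (Rpower t (x - 1)) with (x * Rpower t (x - 1) * / x) by (field; lra).
        apply is_derive_mc. apply is_derive_Rpower; lra.
      + intros t Ht. apply cont_Rpower; lra. }
  assert (A2 : RInt (fg x) 1 M' <= 2 * Kx x).
  { apply Rle_trans with (RInt (fun t => Kx x * exp (- (t / 2))) 1 M').
    - apply RInt_le; auto. apply exR; [intros; apply fg_cont; auto|lra|lra].
      apply (ex_RInt_continuous (V:=R_CompleteNormedModule)). intros z Hz.
      apply exd_cont. auto_derive. auto.
      intros t Ht. unfold fg. assert (H := Rpow_bound x t ltac:(lra)).
      replace (- (t / 2)) with (t / 2 + - t) by field. rewrite exp_plus.
      assert (0 < exp (- t)) by apply exp_pos. nra.
    - rewrite (RInt_FTC (fun t => - 2 * Kx x * exp (- (t / 2)))); auto.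
      + assert (0 < exp (- (M' / 2))) by apply exp_pos.
        assert (H9 := exp_le (- (1 / 2)) 0 ltac:(lra)). rewrite exp_0 in H9. nra.
      + intros t Ht. auto_derive. auto. unfold Rdiv. field.
      + intros t Ht. apply exd_cont. auto_derive. auto. }
  unfold Bx. lra.
Qed.

Lemma Gamma_spec x : 0 < x ->
  (forall e M, 0 < e -> e <= M -> RInt (fg x) e M <= Gamma x) /\
  (forall d, 0 < d -> exists e0 M0, 0 < e0 /\ e0 <= M0 /\
       forall e M, 0 < e -> e <= e0 -> M0 <= M -> Gamma x - d < RInt (fg x) e M).
Proof.
  intros Hx.
  destruct (imp_int (fg x) (fg_cont x) (fun t _ => fg_pos x t) (Bx x)) as [L [HL [H1 H2]]].
  { intros e M He HM. apply fg_bound; auto. }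
  assert (E : Gamma x = L).
  { unfold Gamma. exact (@is_RInt_gen_unique R_CompleteNormedModule (at_right 0) (Rbar_locally p_infty)
      (Proper_StrongProper _ (at_right_proper_filter 0)) (Proper_StrongProper _ (Rbar_locally_filter p_infty)) _ _ HL). }
  rewrite E. auto.
Qed.

Lemma Gamma_pos x : 0 < x -> 0 < Gamma x.
Proof.
  intros Hx. destruct (Gamma_spec x Hx) as [H1 _].
  apply Rlt_le_trans with (RInt (fg x) (1/2) 2); [|apply H1; lra].
  apply RInt_gt_0. lra. intros t Ht. unfold fg. apply Rmult_lt_0_compat. apply Rpower_pos. apply exp_pos.
  intros t Ht. apply fg_cont. lra.
Qed.

Lemma binom n y : (1 + y) ^ n = sm (fun i => Cb n i * y ^ i) (S n).
Proof.
  induction n. simpl. ring.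
  rewrite (pascal_sum (fun i => y ^ i) n). simpl pow at 1. rewrite IHn.
  replace (sm (fun j => Cb n j * y ^ S j) (S n)) with (y * sm (fun i => Cb n i * y ^ i) (S n)).
  ring. rewrite <- sm_scal. apply sm_ext. intros; simpl; ring.
Qed.

Definition gn (x : R) (n : nat) (t : R) := Rpower t (x - 1) * (1 - t / INR n) ^ n.
Definition Fn (x : R) (n : nat) (t : R) :=
  sm (fun i => Cb n i * (- / INR n) ^ i * (Rpower t (x + INR i) * / (x + INR i))) (S n).
Definition Pn (x : R) (n : nat) := sm (fun i => Cb n i * (-1) ^ i / (x + INR i)) (S n).

Lemma Rpower_shift t y i : 0 < t -> Rpower t (y + INR i) = Rpower t y * t ^ i.
Proof. intros Ht. rewrite Rpower_plus, Rpower_pow; auto. Qed.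

Lemma Fn_derive x n t : 0 < x -> 0 < t -> is_derive (Fn x n) t (gn x n t).
Proof.
  intros Hx Ht. unfold Fn.
  assert (HD := is_derive_sm (fun i y => Cb n i * (- / INR n) ^ i * (Rpower y (x + INR i) * / (x + INR i)))
     (fun i => Cb n i * (- / INR n) ^ i * (((x + INR i) * Rpower t (x + INR i - 1)) * / (x + INR i))) (S n) t).
  replace (gn x n t) with (sm (fun i => Cb n i * (- / INR n) ^ i * (((x + INR i) * Rpower t (x + INR i - 1)) * / (x + INR i))) (S n)).
  apply HD. intros m Hm. apply is_derive_sc. apply is_derive_mc. apply is_derive_Rpower; auto.
  unfold gn. replace (1 - t / INR n) with (1 + (- / INR n * t)) by (unfold Rdiv; ring).
  rewrite binom, <- sm_scal. apply sm_ext. intros i Hi.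
  assert (0 <= INR i) by apply pos_INR.
  replace (x + INR i - 1) with ((x - 1) + INR i) by ring. rewrite Rpower_shift by auto.
  rewrite Rpow_mult_distr. field. lra.
Qed.

Lemma gn_cont x n t : (1 <= n)%nat -> 0 < t -> continuous (gn x n) t.
Proof.
  intros Hn Ht. apply exd_cont. unfold gn, Rpower. assert (INR n <> 0) by (apply not_0_INR; lia).
  auto_derive. auto.
Qed.

Lemma Fn_at_n x n : 0 < x -> (1 <= n)%nat -> Fn x n (INR n) = Rpower (INR n) x * Pn x n.
Proof.
  intros Hx Hn. unfold Fn, Pn. rewrite <- sm_scal. apply sm_ext. intros i Hi.
  assert (0 < INR n) by (apply lt_0_INR; lia).
  rewrite Rpower_shift by auto.
  replace (- / INR n) with (-1 * / INR n) by ring. rewrite Rpow_mult_distr.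
  assert (0 <= INR i) by apply pos_INR.
  assert (INR n ^ i <> 0) by (apply pow_nonzero; lra).
  rewrite pow_inv. field. split; [lra|auto].
Qed.

Lemma pow_le1 e i : 0 <= e <= 1 -> e ^ i <= 1.
Proof. intros H. rewrite <- (pow1 i). apply pow_incr. lra. Qed.

Lemma sm_abs_le F G n : (forall i, (i < n)%nat -> Rabs (F i) <= G i) -> Rabs (sm F n) <= sm G n.
Proof.
  induction n; intros H; simpl. rewrite Rabs_R0; lra.
  apply Rle_trans with (Rabs (sm F n) + Rabs (F n)). apply Rabs_triang.
  assert (Rabs (sm F n) <= sm G n) by auto. assert (Rabs (F n) <= G n) by auto. lra.
Qed.

Definition K2 (x : R) (n : nat) := sm (fun i => Cb n i * (/ INR n) ^ i * / (x + INR i)) (S n).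

Lemma Fn_small x n e : 0 < x -> (1 <= n)%nat -> 0 < e <= 1 -> Rabs (Fn x n e) <= Rpower e x * K2 x n.
Proof.
  intros Hx Hn He. unfold Fn, K2. rewrite <- sm_scal. apply sm_abs_le. intros i Hi.
  assert (0 < INR n) by (apply lt_0_INR; lia). assert (0 <= INR i) by apply pos_INR.
  rewrite Rpower_shift by lra.
  assert (Hc := Cb_nonneg n i).
  assert (0 < Rpower e x) by apply Rpower_pos.
  assert (0 <= e ^ i <= 1) by (split; [apply pow_le; lra| apply pow_le1; lra]).
  assert (0 < (/ INR n) ^ i) by (apply pow_lt, Rinv_0_lt_compat; lra).
  assert (0 < / (x + INR i)) by (apply Rinv_0_lt_compat; lra).
  rewrite !Rabs_mult. rewrite (Rabs_right (Cb n i)) by lra. rewrite <- RPow_abs.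
  rewrite Rabs_Ropp, Rabs_right by (apply Rle_ge, Rlt_le, Rinv_0_lt_compat; lra).
  rewrite (Rabs_right (Rpower e x)) by lra. rewrite (Rabs_right (e ^ i)) by lra.
  rewrite (Rabs_right (/ (x + INR i))) by lra.
  assert (0 <= Cb n i * (/ INR n) ^ i * / (x + INR i)) by (apply Rmult_le_pos; [apply Rmult_le_pos|]; lra).
  replace (Cb n i * (/ INR n) ^ i * (Rpower e x * e ^ i * / (x + INR i))) with
    ((Cb n i * (/ INR n) ^ i * / (x + INR i)) * Rpower e x * e ^ i) by ring.
  set (C := Cb n i * (/ INR n) ^ i * / (x + INR i)) in *. set (Q := Rpower e x) in *. set (E := e ^ i) in *. assert (C * Q * E <= C * Q * 1) by (apply Rmult_le_compat_l; [apply Rmult_le_pos|]; lra). lra.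
Qed.

Lemma exp_pow z n : exp z ^ n = exp (INR n * z).
Proof.
  induction n. simpl. rewrite Rmult_0_l, exp_0. auto.
  rewrite S_INR. simpl. rewrite IHn. rewrite <- exp_plus. f_equal. ring.
Qed.

Lemma exp_approx n t : (1 <= n)%nat -> 0 <= t <= INR n ->
  (1 - t / INR n) ^ n <= exp (- t) /\ exp (- t) - (1 - t / INR n) ^ n <= t ^ 2 * exp (- t) / INR n.
Proof.
  intros Hn Ht. assert (Hn0 : 0 < INR n) by (apply lt_0_INR; lia).
  set (y := t / INR n).
  assert (Hy : 0 <= y <= 1).
  { unfold y. split. apply Rdiv_le_0_compat; lra. apply Rmult_le_reg_r with (INR n); auto.
    unfold Rdiv. rewrite Rmult_assoc, Rinv_l by lra. lra. }
  assert (Hty : t = INR n * y) by (unfold y; field; lra).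
  split.
  - replace (exp (- t)) with (exp (- y) ^ n) by (rewrite exp_pow; f_equal; lra).
    apply pow_incr. split. lra. assert (H := exp_ineq1_le (- y)). lra.
  - assert (H1 : (1 + y) * (1 - y) <= exp y * (1 - y)).
    { apply Rmult_le_compat_r. lra. apply exp_ineq1_le. }
    assert (H2 : (1 - y * y) ^ n <= (exp y * (1 - y)) ^ n).
    { apply pow_incr. split. nra. nra. }
    assert (H3 := bernoulli n (1 - y * y) ltac:(nra)).
    rewrite Rpow_mult_distr, exp_pow, <- Hty in H2.
    assert (H4 : 1 - t ^ 2 / INR n <= exp t * (1 - y) ^ n).
    { replace (t ^ 2 / INR n) with (INR n * (y * y)) by (rewrite Hty; field; lra). lra. }
    assert (H5 : exp (- t) * exp t = 1) by (rewrite <- exp_plus, Rplus_opp_l, exp_0; auto).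
    assert (H6 : 0 < exp (- t)) by apply exp_pos.
    assert (H7 : exp (- t) * (1 - t ^ 2 / INR n) <= exp (- t) * (exp t * (1 - y) ^ n)) by (apply Rmult_le_compat_l; lra).
    replace (exp (- t) * (exp t * (1 - y) ^ n)) with ((1 - y) ^ n) in H7 by (rewrite <- Rmult_assoc, H5; ring).
    unfold Rdiv in *. lra.
Qed.

Lemma fg_x2 x t : 0 < t -> fg (x + 2) t = Rpower t (x - 1) * t ^ 2 * exp (- t).
Proof.
  intros Ht. unfold fg. replace (x + 2 - 1) with (x - 1 + INR 2) by (simpl; ring).
  rewrite Rpower_shift; auto.
Qed.

Lemma int_cmp x n e : 0 < x -> (1 <= n)%nat -> 0 < e <= INR n ->
  RInt (gn x n) e (INR n) <= RInt (fg x) e (INR n) <=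
  RInt (gn x n) e (INR n) + / INR n * RInt (fg (x + 2)) e (INR n).
Proof.
  intros Hx Hn He. assert (Hn0 : 0 < INR n) by (apply lt_0_INR; lia).
  assert (Eg : ex_RInt (gn x n) e (INR n)).
  { apply (ex_RInt_continuous (V:=R_CompleteNormedModule)). intros z Hz. rewrite Rmin_left in Hz by lra.
    apply gn_cont; auto; lra. }
  assert (Ef : forall y, ex_RInt (fg y) e (INR n)) by (intros; apply exR; [intros; apply fg_cont; auto|lra|lra]).
  split.
  - apply RInt_le; auto. lra. intros t Ht. unfold gn, fg.
    destruct (exp_approx n t Hn ltac:(lra)) as [A _].
    apply Rmult_le_compat_l. apply Rlt_le, Rpower_pos. auto.
  - assert (HI : is_RInt (fun t => gn x n t + / INR n * fg (x + 2) t) e (INR n)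
         (RInt (gn x n) e (INR n) + / INR n * RInt (fg (x + 2)) e (INR n))).
    { apply (is_RInt_plus (V:=R_NormedModule) (gn x n) (fun t => / INR n * fg (x + 2) t)).
      apply (RInt_correct (V:=R_CompleteNormedModule)); auto.
      apply (is_RInt_scal (V:=R_NormedModule) (fg (x + 2))).
      apply (RInt_correct (V:=R_CompleteNormedModule)); auto. }
    rewrite <- (is_RInt_unique _ _ _ _ HI).
    apply RInt_le; auto. lra. eexists; eauto.
    intros t Ht. rewrite fg_x2 by lra. unfold gn, fg.
    destruct (exp_approx n t Hn ltac:(lra)) as [_ A].
    assert (0 < Rpower t (x - 1)) by apply Rpower_pos.
    assert (Rpower t (x - 1) * (exp (- t) - (1 - t / INR n) ^ n) <= Rpower t (x - 1) * (t ^ 2 * exp (- t) / INR n))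
      by (apply Rmult_le_compat_l; lra).
    unfold Rdiv in *. nra.
Qed.

Lemma Rpower_small x d : 0 < x -> 0 < d -> exists e1, 0 < e1 <= 1 /\ forall e, 0 < e <= e1 -> Rpower e x <= d.
Proof.
  intros Hx Hd. exists (Rmin 1 (Rpower d (/ x))).
  assert (0 < Rpower d (/ x)) by apply Rpower_pos.
  split. split. apply Rmin_glb_lt; lra. apply Rmin_l.
  intros e He. apply Rle_trans with (Rpower (Rpower d (/ x)) x).
  apply Rle_Rpower_l. lra. split. lra. destruct He. apply Rle_trans with (Rmin 1 (Rpower d (/ x))); auto. apply Rmin_r.
  rewrite Rpower_mult. rewrite Rinv_l by lra. unfold Rpower. rewrite Rmult_1_l. rewrite exp_ln; lra.
Qed.

Lemma K2_nonneg x n : 0 < x -> 0 <= K2 x n.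
Proof.
  intros Hx. unfold K2. apply sm_nonneg. intros i Hi. assert (0 <= INR i) by apply pos_INR.
  apply Rmult_le_pos. apply Rmult_le_pos. apply Cb_nonneg. apply pow_le. 
  destruct n. simpl. rewrite Rinv_0; lra. apply Rlt_le, Rinv_0_lt_compat, lt_0_INR; lia.
  apply Rlt_le, Rinv_0_lt_compat; lra.
Qed.

Lemma gauss x : 0 < x -> is_lim_seq (fun n => Rpower (INR n) x * Pn x n) (Gamma x).
Proof.
  intros Hx. apply is_lim_seq_spec. intros eps. set (d := eps / 3).
  assert (Hd : 0 < d) by (unfold d; assert (H := cond_pos eps); lra).
  destruct (Gamma_spec x Hx) as [G1 G2]. destruct (G2 d Hd) as [e0 [M0 [He0 [HeM Hq]]]].
  destruct (INR_unbounded (Rmax (Rmax M0 1) (Bx (x + 2) / d))) as [N HN].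
  exists N. intros n Hn. apply le_INR in Hn.
  assert (H1 := Rmax_l (Rmax M0 1) (Bx (x + 2) / d)). assert (H2 := Rmax_r (Rmax M0 1) (Bx (x + 2) / d)).
  assert (H3 := Rmax_l M0 1). assert (H4 := Rmax_r M0 1).
  assert (Hn1 : (1 <= n)%nat). { destruct n. simpl in Hn. lra. lia. }
  assert (Hn0 : 0 < INR n) by lra.
  assert (HK := K2_nonneg x n Hx).
  destruct (Rpower_small x (d / (K2 x n + 1)) Hx) as [e1 [He1 He1']].
  { apply Rdiv_lt_0_compat; lra. }
  set (e := Rmin e0 e1).
  assert (He : 0 < e) by (apply Rmin_glb_lt; lra).
  assert (Hee0 : e <= e0) by apply Rmin_l. assert (Hee1 : e <= e1) by apply Rmin_r.
  assert (A : Gamma x - d < RInt (fg x) e (INR n)) by (apply Hq; lra).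
  assert (B : RInt (fg x) e (INR n) <= Gamma x) by (apply G1; lra).
  destruct (int_cmp x n e Hx Hn1 ltac:(lra)) as [C1 C2].
  assert (C3 : RInt (fg (x + 2)) e (INR n) <= Bx (x + 2)) by (apply fg_bound; lra).
  assert (C4 : / INR n * Bx (x + 2) < d).
  { apply Rmult_lt_reg_l with (INR n); auto. rewrite <- Rmult_assoc, Rinv_r by lra.
    assert (Bx (x + 2) / d * d = Bx (x + 2)) by (field; lra).
    assert (Bx (x + 2) / d < INR n) by lra. nra. }
  assert (C5 : / INR n * RInt (fg (x + 2)) e (INR n) <= / INR n * Bx (x + 2)).
  { apply Rmult_le_compat_l; auto. apply Rlt_le, Rinv_0_lt_compat; auto. }
  assert (D : RInt (gn x n) e (INR n) = Fn x n (INR n) - Fn x n e).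
  { apply RInt_FTC. lra. intros t Ht. apply Fn_derive; lra. intros t Ht. apply gn_cont; auto; lra. }
  assert (F : Rabs (Fn x n e) <= d).
  { apply Rle_trans with (Rpower e x * K2 x n). apply Fn_small; auto; lra.
    assert (Rpower e x <= d / (K2 x n + 1)) by (apply He1'; lra).
    assert (d / (K2 x n + 1) * K2 x n <= d).
    { unfold Rdiv. rewrite Rmult_assoc. rewrite <- (Rmult_1_r d) at 2. apply Rmult_le_compat_l. lra.
      apply Rmult_le_reg_l with (K2 x n + 1). lra. rewrite <- Rmult_assoc, Rinv_r by lra. lra. }
    assert (0 < Rpower e x) by apply Rpower_pos. nra. }
  rewrite <- Fn_at_n by auto.
  apply Rabs_le_between in F.
  apply Rabs_lt_between'. unfold d in *. lra.
Qed.

Lemma Pn_prod n : forall x, 0 < x -> Pn x n = INR (fact n) / pr (fun j => x + INR j) (S n).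
Proof.
  induction n; intros x Hx.
  - unfold Pn. simpl. field. lra.
  - assert (E : Pn x (S n) = Pn x n - Pn (x + 1) n).
    { unfold Pn.
      rewrite (sm_ext (fun i => Cb (S n) i * (-1) ^ i / (x + INR i)) (fun j => Cb (S n) j * ((-1) ^ j / (x + INR j))))
        by (intros; unfold Rdiv; ring).
      rewrite pascal_sum.
      assert (E1 : sm (fun j => Cb n j * ((-1) ^ j / (x + INR j))) (S n) = sm (fun i => Cb n i * (-1) ^ i / (x + INR i)) (S n))
        by (apply sm_ext; intros; unfold Rdiv; ring).
      assert (E2 : sm (fun j => Cb n j * ((-1) ^ S j / (x + INR (S j)))) (S n) = - sm (fun i => Cb n i * (-1) ^ i / (x + 1 + INR i)) (S n)).
      { transitivity (-1 * sm (fun i => Cb n i * (-1) ^ i / (x + 1 + INR i)) (S n)); [|ring].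
        rewrite <- sm_scal. apply sm_ext. intros j Hj.
        rewrite S_INR. replace (x + (INR j + 1)) with (x + 1 + INR j) by ring. simpl. unfold Rdiv. ring. }
      rewrite E1, E2. ring. }
    rewrite E, !IHn by lra.
    assert (HR : 0 < pr (fun j => x + INR (S j)) n).
    { apply pr_pos. intros j Hj. rewrite S_INR. assert (0 <= INR j) by apply pos_INR. lra. }
    set (R0 := pr (fun j => x + INR (S j)) n) in *.
    assert (P1 : pr (fun j => x + INR j) (S n) = x * R0) by (rewrite pr_shift; simpl; f_equal; ring).
    assert (P2 : pr (fun j => x + 1 + INR j) (S n) = R0 * (x + 1 + INR n)).
    { simpl. f_equal. apply pr_ext. intros j Hj. rewrite S_INR. ring. }
    assert (P3 : pr (fun j => x + INR j) (S (S n)) = x * R0 * (x + 1 + INR n)).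
    { change (pr (fun j => x + INR j) (S n) * (x + INR (S n)) = x * R0 * (x + 1 + INR n)). rewrite P1, S_INR. ring. }
    rewrite P1, P2, P3. rewrite fact_simpl, mult_INR, S_INR.
    assert (0 <= INR n) by apply pos_INR. field. repeat split; lra.
Qed.

Lemma term_le_sum (f : nat -> R) n : (forall k, 0 <= f k) -> f n <= sum_f_R0 f n.
Proof.
  intros H. destruct n. simpl. lra. simpl.
  assert (0 <= sum_f_R0 f n). { clear -H. induction n; simpl. auto. specialize (H (S n)). lra. }
  lra.
Qed.

Lemma fact_pos k : 0 < INR (fact k).
Proof. apply lt_0_INR. apply lt_O_fact. Qed.

Lemma CV_inf (u : nat -> R) M : (forall k, Rabs (u k) <= M / INR (fact k)) -> CV_radius u = p_infty.
Proof.
  intros Hu. destruct (CV_radius_bounded u) as [Hub Hlub].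
  assert (Hall : forall r : R, Rbar_le r (CV_radius u)).
  { intros r. apply Hub. exists (M * exp (Rabs r)). intros n.
    rewrite Rabs_mult, <- RPow_abs.
    assert (H1 := Hu n). assert (H0 := Rabs_pos (u n)). assert (HF := fact_pos n).
    assert (H2 : Rabs r ^ n / INR (fact n) <= exp (Rabs r)).
    { apply Rle_trans with (sum_f_R0 (fun k => Rabs r ^ k / INR (fact k)) n).
      apply (term_le_sum (fun k => Rabs r ^ k / INR (fact k))). intros k.
      apply Rdiv_le_0_compat. apply pow_le, Rabs_pos. apply fact_pos.
      apply exp_ge_taylor. apply Rabs_pos. }
    assert (HM : 0 <= M) by (assert (0 <= M / INR (fact n)) by lra; apply Rmult_le_reg_r with (/ INR (fact n));
       [apply Rinv_0_lt_compat; auto| unfold Rdiv in *; lra]).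
    assert (0 <= Rabs r ^ n) by (apply pow_le, Rabs_pos).
    apply Rle_trans with (M / INR (fact n) * Rabs r ^ n). apply Rmult_le_compat_r; auto.
    replace (M / INR (fact n) * Rabs r ^ n) with (M * (Rabs r ^ n / INR (fact n))) by (field; lra).
    apply Rmult_le_compat_l; auto. }
  destruct (CV_radius u) as [y| |] eqn:E; auto.
  - specialize (Hall (y + 1)). simpl in Hall. lra.
  - specialize (Hall 0). simpl in Hall. contradiction.
Qed.

Lemma sum_f_sm f m : sum_f_R0 f m = sm f (S m).
Proof. induction m; simpl. ring. rewrite IHm. simpl. ring. Qed.

Lemma Cb_C m j : (j <= m)%nat -> Cb m j = Binomial.C m j.
Proof.
  revert j; induction m; intros j Hj.
  - replace j with O by lia. simpl. unfold Binomial.C. simpl. field.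
  - destruct j. rewrite Cb_0, C_n_0. auto.
    simpl. destruct (Nat.eq_dec j m).
    + subst. rewrite (Cb_big m (S m)) by lia. rewrite IHm by lia. rewrite !C_n_n. ring.
    + rewrite !IHm by lia. apply pascal. lia.
Qed.

Lemma Dd_binom m u k : Dd m u k = sm (fun j => Cb m j * ((-1) ^ j * u (k + j)%nat)) (S m).
Proof.
  revert k; induction m; intros k.
  - simpl. rewrite Nat.add_0_r. ring.
  - rewrite (pascal_sum (fun j => (-1) ^ j * u (k + j)%nat) m). simpl Dd. rewrite !IHm.
    assert (E : sm (fun j => Cb m j * ((-1) ^ S j * u (k + S j)%nat)) (S m) =
      - sm (fun j => Cb m j * ((-1) ^ j * u (S k + j)%nat)) (S m)).
    { transitivity (-1 * sm (fun j => Cb m j * ((-1) ^ j * u (S k + j)%nat)) (S m)); [|ring].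
      rewrite <- sm_scal. apply sm_ext. intros j Hj. replace (k + S j)%nat with (S k + j)%nat by lia. simpl. ring. }
    rewrite E. ring.
Qed.

Lemma Dd_shift m u n k : Dd m (fun i => u (i + n)%nat) k = Dd m u (k + n).
Proof. revert k; induction m; intros k; simpl; auto. rewrite !IHm. auto. Qed.

Section SER.
Variable c : nat -> R.
Hypothesis Hcm : forall m k, 0 <= Dd m c k.

Lemma c_nonneg k : 0 <= c k.
Proof. apply (Hcm O k). Qed.
Lemma c_le0 k : c k <= c O.
Proof.
  induction k. lra. assert (H := Hcm 1%nat k). simpl in H. lra.
Qed.

Definition ak k := c k / INR (fact k).

Lemma ak_rad : CV_radius ak = p_infty.
Proof.
  apply (CV_inf _ (c O)). intros k. unfold ak. rewrite Rabs_right.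
  apply Rmult_le_compat_r. apply Rlt_le, Rinv_0_lt_compat, fact_pos. apply c_le0.
  apply Rle_ge, Rdiv_le_0_compat. apply c_nonneg. apply fact_pos.
Qed.

Definition ek (k : nat) := / INR (fact k).
Lemma ek_rad : CV_radius ek = p_infty.
Proof.
  apply (CV_inf _ 1). intros k. unfold ek. rewrite Rabs_right. unfold Rdiv. lra.
  apply Rle_ge, Rlt_le, Rinv_0_lt_compat, fact_pos.
Qed.

Lemma PS_nonneg n x : 0 < x -> 0 <= PSeries (PS_derive_n n ak) (- x).
Proof.
  intros Hx.
  set (dk := fun k => (-1) ^ k * PS_derive_n n ak k).
  assert (Hb : forall k, PS_derive_n n ak k = c (k + n) / INR (fact k)).
  { intros k. unfold PS_derive_n, ak. assert (H1 := fact_pos (k + n)). assert (H2 := fact_pos k). field. lra. }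
  assert (E1 : PSeries (PS_derive_n n ak) (- x) = PSeries dk x).
  { unfold PSeries. apply Series_ext. intros k. unfold dk.
    replace (- x) with (-1 * x) by ring. rewrite Rpow_mult_distr. ring. }
  assert (Rd : CV_radius dk = p_infty).
  { apply (CV_inf _ (c O)). intros k. unfold dk. rewrite Rabs_mult, pow_1_abs, Rmult_1_l, Hb.
    rewrite Rabs_right. apply Rmult_le_compat_r. apply Rlt_le, Rinv_0_lt_compat, fact_pos. apply c_le0.
    apply Rle_ge, Rdiv_le_0_compat. apply c_nonneg. apply fact_pos. }
  assert (Hlt : forall a, CV_radius a = p_infty -> Rbar_lt (Rabs x) (CV_radius a)) by (intros a Ha; rewrite Ha; simpl; auto).
  assert (HM := PSeries_mult dk ek x (Hlt _ Rd) (Hlt _ ek_rad)).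
  assert (He : 0 < PSeries ek x) by (unfold ek; rewrite <- exp_Reals; apply exp_pos).
  assert (Hpm : forall m, PS_mult dk ek m = Dd m c n / INR (fact m)).
  { intros m. unfold PS_mult. rewrite sum_f_sm. replace (Dd m c n) with (Dd m (fun i => c (i + n)%nat) 0) by (rewrite Dd_shift; auto). rewrite Dd_binom. unfold Rdiv. rewrite Rmult_comm, <- sm_scal.
    apply sm_ext. intros j Hj. unfold dk, ek. rewrite Hb. rewrite Cb_C by lia. unfold Binomial.C.
    assert (H1 := fact_pos m). assert (H2 := fact_pos j). assert (H3 := fact_pos (m - j)). simpl. field. lra. }
  assert (H0 : 0 <= PSeries (PS_mult dk ek) x).
  { unfold PSeries.
    assert (Z : Series (fun _ : nat => 0) = 0).
    { rewrite (Series_ext _ (fun n : nat => 0 * 0)) by (intros; ring). rewrite Series_scal_l. ring. }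
    rewrite <- Z. apply Series_le.
    - intros k. split. lra. rewrite Hpm. apply Rmult_le_pos. apply Rdiv_le_0_compat. apply Hcm. apply fact_pos.
      apply pow_le; lra.
    - assert (H := ex_pseries_mult dk ek x (Hlt _ Rd) (Hlt _ ek_rad)). unfold ex_pseries in H.
      eapply ex_series_ext; [|exact H]. intros k. simpl. unfold scal; simpl. unfold mult; simpl. 
      rewrite pow_n_pow. ring. }
  rewrite E1. rewrite HM in H0.
  destruct (Rle_or_lt 0 (PSeries dk x)); auto. nra.
Qed.

Lemma CM_series : completely_monotonic_pos (fun z => Series (fun k => c k * (- z) ^ k / INR (fact k))).
Proof.
  assert (Ef : (fun z => Series (fun k => c k * (- z) ^ k / INR (fact k))) = (fun z => PSeries ak (- z))).
  { apply functional_extensionality. intros z. unfold PSeries. apply Series_ext. intros k. unfold ak, Rdiv. ring. }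
  rewrite Ef.
  assert (Hlt : forall a y, CV_radius a = p_infty -> Rbar_lt (Rabs y) (CV_radius a)) by (intros a y Ha; rewrite Ha; simpl; auto).
  assert (HD : forall n z, Derive_n (fun z => PSeries ak (- z)) n z = (-1) ^ n * PSeries (PS_derive_n n ak) (- z)).
  { intros n z. rewrite Derive_n_comp_opp. rewrite Derive_n_PSeries; auto. apply Hlt, ak_rad.
    apply filter_forall. intros y k Hk. apply ex_derive_n_PSeries. apply Hlt, ak_rad. }
  intros n x Hx. split.
  - apply ex_derive_ext with (fun z => (-1) ^ n * PSeries (PS_derive_n n ak) (- z)).
    intros t. rewrite HD. auto.
    apply ex_derive_scal. apply (ex_derive_comp (PSeries (PS_derive_n n ak)) (fun z => - z)).
    apply ex_derive_PSeries. apply Hlt. rewrite CV_radius_derive_n. apply ak_rad.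
    exists (-1). auto_derive; auto; ring.
  - rewrite HD. rewrite <- Rmult_assoc, <- pow_add. replace (n + n)%nat with (2 * n)%nat by lia.
    rewrite pow_1_even, Rmult_1_l. apply PS_nonneg; auto.
Qed.

End SER.

Lemma exists_dl p (a b : nat -> R) : (forall i, (i < p)%nat -> 0 < a i) -> (forall i, (i < p)%nat -> 0 < b i) ->
  exists dl, 0 < dl /\ (forall i, (i < p)%nat -> dl < a i) /\ (forall i, (i < p)%nat -> dl < b i).
Proof.
  induction p; intros Ha Hb.
  - exists 1. repeat split; try lra; intros; lia.
  - destruct IHp as [d [Hd [H1 H2]]]; auto.
    assert (Hap := Ha p (le_n _)). assert (Hbp := Hb p (le_n _)).
    exists (Rmin d (Rmin (a p / 2) (b p / 2))).
    assert (M1 := Rmin_l d (Rmin (a p / 2) (b p / 2))). assert (M2 := Rmin_r d (Rmin (a p / 2) (b p / 2))).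
    assert (M3 := Rmin_l (a p / 2) (b p / 2)). assert (M4 := Rmin_r (a p / 2) (b p / 2)).
    split. apply Rmin_glb_lt; auto. apply Rmin_glb_lt; lra.
    split; intros i Hi; destruct (Nat.eq_dec i p); subst; try lra.
    assert (H := H1 i ltac:(lia)); lra. assert (H := H2 i ltac:(lia)); lra.
Qed.

Lemma lim_pr (U : nat -> nat -> R) (l : nat -> R) p :
  (forall i, (i < p)%nat -> is_lim_seq (fun N => U N i) (l i)) ->
  is_lim_seq (fun N => pr (fun i => U N i) p) (pr l p).
Proof.
  induction p; intros H; simpl. apply is_lim_seq_const.
  apply is_lim_seq_mult'; auto.
Qed.

Lemma pr_ne0 F n : (forall j, (j < n)%nat -> 0 < F j) -> pr F n <> 0.
Proof. intros H. apply Rgt_not_eq, pr_pos; auto. Qed.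

Lemma ratio_eq N a b s : 0 < a + s -> 0 < b + s -> (1 <= N)%nat ->
  (Rpower (INR N) (a + s) * Pn (a + s) N) / (Rpower (INR N) (b + s) * Pn (b + s) N) =
  (Rpower (INR N) a / Rpower (INR N) b) * pr (fun j => (b + INR j + s) / (a + INR j + s)) (S N).
Proof.
  intros Ha Hb HN. rewrite !Pn_prod by auto. rewrite !Rpower_plus.
  assert (Hpa : forall j, 0 < a + s + INR j) by (intros j; assert (H := pos_INR j); lra).
  assert (Hpb : forall j, 0 < b + s + INR j) by (intros j; assert (H := pos_INR j); lra).
  rewrite (pr_ext (fun j => (b + INR j + s) / (a + INR j + s)) (fun j => (b + s + INR j) * / (a + s + INR j))).
  2:{ intros j Hj. replace (b + INR j + s) with (b + s + INR j) by ring.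
       replace (a + INR j + s) with (a + s + INR j) by ring. reflexivity. }
  rewrite pr_mult, pr_inv.
  2:{ intros j Hj. apply Rgt_not_eq, Hpa. }
  assert (H1 := pr_ne0 (fun j => a + s + INR j) (S N) (fun j _ => Hpa j)).
  assert (H2 := pr_ne0 (fun j => b + s + INR j) (S N) (fun j _ => Hpb j)).
  assert (H3 := fact_pos N).
  assert (H4 := Rpower_pos (INR N) a). assert (H5 := Rpower_pos (INR N) b). assert (H6 := Rpower_pos (INR N) s).
  field. repeat split; lra.
Qed.

Theorem CM_gamma_seq (p : nat) (A : R) (alpha beta : nat -> R) :
  0 < A ->
  (forall i, (i < p)%nat -> 0 < alpha i) ->
  (forall i, (i < p)%nat -> 0 < beta i) ->
  (forall i, (i + 1 < p)%nat -> beta i <= beta (i + 1)%nat) ->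
  (forall k, (1 <= k <= p)%nat -> rsum beta k - rsum alpha k >= 0) ->
  forall m k, 0 <= Dd m (fun k => rprod (fun i => Gamma (alpha i + INR k * A) / Gamma (beta i + INR k * A)) p) k.
Proof.
  intros HA Ha Hb Hbs Hs m k.
  destruct (exists_dl p alpha beta Ha Hb) as [dl [Hdl [Hda Hdb]]].
  assert (Hs' : forall k, (1 <= k <= p)%nat -> sm beta k - sm alpha k >= 0) by (intros; rewrite <- !rsum_sm; auto).
  set (c := fun k => rprod (fun i => Gamma (alpha i + INR k * A) / Gamma (beta i + INR k * A)) p).
  set (h := fun N k => pr (fun i => (Rpower (INR N) (alpha i + INR k * A) * Pn (alpha i + INR k * A) N) /
                                    (Rpower (INR N) (beta i + INR k * A) * Pn (beta i + INR k * A) N)) p).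
  assert (Hks : forall k, 0 <= INR k * A) by (intros; apply Rmult_le_pos; [apply pos_INR|lra]).
  assert (Hlim : forall k, is_lim_seq (fun N => h N k) (c k)).
  { intros k'. unfold h, c. rewrite rprod_pr.
    apply (lim_pr (fun N i => (Rpower (INR N) (alpha i + INR k' * A) * Pn (alpha i + INR k' * A) N) /
                                    (Rpower (INR N) (beta i + INR k' * A) * Pn (beta i + INR k' * A) N))).
    intros i Hi. assert (H1 := Ha i Hi). assert (H2 := Hb i Hi). assert (H3 := Hks k').
    apply is_lim_seq_div'. apply gauss; lra. apply gauss; lra. apply Rgt_not_eq, Gamma_pos; lra. }
  assert (Hpos : forall N, 0 <= Dd m (h (S N)) k).
  { intros N.
    set (KN := pr (fun i => Rpower (INR (S N)) (alpha i) / Rpower (INR (S N)) (beta i)) p).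
    rewrite (Dd_ext m _ (fun i => KN * Qt p (S N) alpha beta O (INR i * A))).
    - rewrite Dd_scal. apply Rmult_le_pos.
      + apply Rlt_le, pr_pos. intros i Hi. apply Rdiv_lt_0_compat; apply Rpower_pos.
      + apply (CM_Qt p (S N) alpha beta dl); auto.
    - intros i. unfold h, KN. rewrite Qt_0. rewrite <- pr_swap, <- pr_mult. apply pr_ext. intros j Hj.
      assert (H1 := Ha j Hj). assert (H2 := Hb j Hj). assert (H3 := Hks i).
      apply ratio_eq; try lra. lia. }
  assert (HL := Dd_lim m h c k Hlim).
  apply is_lim_seq_incr_1 in HL.
  assert (HR := is_lim_seq_le (fun _ => 0) (fun N => Dd m (h (S N)) k) 0 (Dd m c k) Hpos (is_lim_seq_const 0) HL).
  simpl in HR. exact HR.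
Qed.

Theorem theorem2 (p : nat) (A : R) (alpha beta : nat -> R) :
  0 < A ->
  (forall i, (i < p)%nat -> 0 < alpha i) ->
  (forall i, (i < p)%nat -> 0 < beta i) ->
  (forall i, (i + 1 < p)%nat -> alpha i <= alpha (i + 1)%nat) ->
  (forall i, (i + 1 < p)%nat -> beta i <= beta (i + 1)%nat) ->
  (forall k, (1 <= k <= p)%nat -> rsum beta k - rsum alpha k >= 0) ->
  rsum (fun j => beta j - alpha j) p > 0 ->
  completely_monotonic_pos (fun z => FoxWright p A alpha beta (- z)).
Proof.
  intros HA Ha Hb Has Hbs Hs Hp.
  unfold FoxWright.
  apply (CM_series (fun k => rprod (fun i => Gamma (alpha i + INR k * A) / Gamma (beta i + INR k * A)) p)).
  apply CM_gamma_seq; auto.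
Qed.
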